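(* Let $M,N,Q$ be positive integers with $N\le M$, let $S=\{\vec b\in\mathbb{F}_2^M: H(\vec b)=N\}$, and let $\mathbf{G}\in\mathbb{F}_2^{Q\times M}$ be such that $\vec b\mapsto\mathbf{G}\vec b$ is injective on $S$. Let $\hat H=\sum_{i,j=1}^M h_{ij}\hat a_i^\dagger\hat a_j+\sum_{i,j,k,l=1}^M g_{ijkl}\hat a_i^\dagger\hat a_j^\dagger\hat a_k\hat a_l$ be a Hermitian operator with real coefficients $h_{ij},g_{ijkl}$, and let $\mathcal{E}(\hat H)=\sum_{\vec b,\vec b'\in S}\langle\vec b'|\hat H|\vec b\rangle\,|\mathbf{G}\vec b'\rangle\langle\mathbf{G}\vec b|$, an operator on $(\mathbb{C}^2)^{\otimes Q}$. Then $\mathcal{E}(\hat H)=\sum_{t=1}^{K}\hat H_t$, where each $\hat H_t$ is a linear combination of pairwise commuting Pauli strings (elements of $\{I,X,Y,Z\}^{\otimes Q}$), and the number $K$ of such groups satisfies $K=\mathcal{O}(M^4)$, i.e. $K\le cM^4$ for an absolute constant $c$ independent of $N,Q,\mathbf{G},h,g$.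
   Context: Fermionic operators are in the Jordan–Wigner representation on the Fock basis $\{|\vec b\rangle:\vec b\in\mathbb{F}_2^M\}$: $\hat a_j|\vec b\rangle=(-1)^{\sum_{m<j}\vec b[m]}|\vec b\oplus\vec e_j\rangle$ if $\vec b[j]=1$ and $\hat a_j|\vec b\rangle=0$ otherwise, and $\hat a_j^\dagger$ is its adjoint; $\vec e_j$ is the $j$-th unit vector. $H(\vec b)$ is Hamming weight. Such a Hamiltonian preserves the span of $\{|\vec b\rangle:\vec b\in S\}$. A set of pairwise commuting Pauli strings can be simultaneously diagonalised by a single Clifford unitary, so each group $\hat H_t$ corresponds to one Clifford measurement basis; the theorem bounds the number of Clifford measurement bases needed to estimate $\langle\mathcal{E}(\hat H)\rangle$. *)

(* Defs.v *)
(* Operators on finite-dimensional Hilbert spaces with a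
   distinguished computational basis indexed by a finite type T are
   represented by their matrix entries  A x y = <x|A|y>. *)
From HB Require Import structures.
From mathcomp Require Import all_boot all_order all_algebra.
Set Implicit Arguments. Unset Strict Implicit. Unset Printing Implicit Defensive.
Import Order.TTheory GRing.Theory Num.Theory.
Local Open Scope ring_scope.

Section Ops.
Variable C : numClosedFieldType.

Definition op (T : finType) := T -> T -> C.

Definition opmul (T : finType) (A B : op T) : op T :=
  fun x y => \sum_(z : T) A x z * B z y.

Definition adj (T : finType) (A : op T) : op T := fun x y => (A y x)^*.

Definition herm_op (T : finType) (A : op T) : Prop := forall x y, adj A x y = A x y.

Definition fock (M : nat) := 'cV['F_2]_M.

Definition hw (M : nat) (b : fock M) : nat := #|[set m : 'I_M | b m 0 == 1]|.

Definition Sfix (M N : nat) : {set fock M} := [set b : fock M | hw b == N].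

(* Jordan-Wigner annihilation operator a_j:
   a_j |b> = (-1)^(sum_{m<j} b[m]) |b + e_j>  if b[j] = 1, and 0 otherwise. *)
Definition ann (M : nat) (j : 'I_M) : op (fock M) :=
  fun b' b =>
    if b j 0 == 1 then
      (-1) ^+ #|[set m : 'I_M | (m < j)%N && (b m 0 == 1)]|
        * (b' == b + delta_mx j 0)%:R
    else 0.

Definition cre (M : nat) (j : 'I_M) : op (fock M) := adj (ann j).

Definition Hop (M : nat) (h : 'I_M -> 'I_M -> C)
    (g : 'I_M -> 'I_M -> 'I_M -> 'I_M -> C) : op (fock M) :=
  fun x y =>
    \sum_(i : 'I_M) \sum_(j : 'I_M) h i j * opmul (cre i) (ann j) x y
  + \sum_(i : 'I_M) \sum_(j : 'I_M) \sum_(k : 'I_M) \sum_(l : 'I_M)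
       g i j k l * opmul (opmul (cre i) (cre j)) (opmul (ann k) (ann l)) x y.

Definition qubits (Q : nat) := 'cV['F_2]_Q.

Definition encode (M N Q : nat) (G : 'M['F_2]_(Q, M)) (A : op (fock M))
    : op (qubits Q) :=
  fun x y =>
    \sum_(b in Sfix M N) \sum_(b' in Sfix M N)
       A b' b * ((x == G *m b') && (y == G *m b))%:R.

Inductive pauli := PI | PX | PY | PZ.

Definition sigma (p : pauli) (u v : 'F_2) : C :=
  match p with
  | PI => (u == v)%:R
  | PX => (u != v)%:R
  | PY => if (u == 0) && (v == 1) then - 'i
          else if (u == 1) && (v == 0) then 'i else 0
  | PZ => (u == v)%:R * (if u == 0 then 1 else -1)
  end.

Definition pstring (Q : nat) := 'I_Q -> pauli.

Definition pauli_op (Q : nat) (P : pstring Q) : op (qubits Q) :=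
  fun x y => \prod_(q : 'I_Q) sigma (P q) (x q 0) (y q 0).

End Ops.

(* Main.v *)
Require Import Defs.
From HB Require Import structures.
From mathcomp Require Import all_boot all_order all_algebra ring zify.
From Stdlib Require Import FunctionalExtensionality.
Set Implicit Arguments. Unset Strict Implicit. Unset Printing Implicit Defensive.
Import Order.TTheory GRing.Theory Num.Theory.
Local Open Scope ring_scope.

Lemma F2_cases (a : 'F_2) : a = 0 \/ a = 1.
Proof. case: a => [[|[|m]] Hm]; [left|right|by []]; exact: val_inj. Qed.
Lemma F2_11 : (1 + 1 : 'F_2) = 0. Proof. exact: val_inj. Qed.
Lemma F2_aa (a : 'F_2) : a + a = 0.
Proof. by case: (F2_cases a) => ->; rewrite ?addr0 ?F2_11. Qed.
Lemma cV_aa n (x : 'cV['F_2]_n) : x + x = 0.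
Proof. by apply/matrixP => i j; rewrite !mxE F2_aa. Qed.
Lemma cV_eq_add n (x y v : 'cV['F_2]_n) : (x == y + v) = (y == x + v).
Proof.
apply/eqP/eqP => ->; by rewrite -addrA cV_aa addr0.
Qed.

Section Pauli.
Variable C : numClosedFieldType.
Variable Q : nat.

Definition sg (a : 'F_2) : C := if a == 1 then -1 else 1.
Definition ph (a b : 'F_2) : C := if (a == 1) && (b == 1) then - 'i else 1.
Definition str1 (a b : 'F_2) : pauli :=
  if a == 1 then (if b == 1 then PY else PX) else (if b == 1 then PZ else PI).

Lemma sg0 : sg 0 = 1. Proof. by []. Qed.
Lemma sgD a b : sg (a + b) = sg a * sg b.
Proof.
by case: (F2_cases a) => ->; case: (F2_cases b) => ->;
  rewrite ?F2_11 /sg /= ?mulr1 ?mul1r ?mulrNN ?mulr1.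
Qed.

Lemma sigma_str1 a b u u' :
  sigma C (str1 a b) u u' = (u == u' + a)%:R * sg (b * u) * ph a b.
Proof.
by case: (F2_cases a) => ->; case: (F2_cases b) => ->;
   case: (F2_cases u) => ->; case: (F2_cases u') => ->;
   rewrite /= ?F2_11 ?addr0 ?add0r ?mulr0 ?mul0r ?mulr1 ?mul1r /sg /ph /=
     ?mulr1 ?mul1r ?mulr0 ?mul0r ?mulN1r ?opprK.
Qed.
Definition qv := qubits Q.
Definition str (v w : qv) : pstring Q := fun q => str1 (v q 0) (w q 0).
Definition SG (w x : qv) : C := \prod_(q : 'I_Q) sg (w q 0 * x q 0).
Definition PH (v w : qv) : C := \prod_(q : 'I_Q) ph (v q 0) (w q 0).
Definition dot (w x : qv) : 'F_2 := \sum_(q : 'I_Q) w q 0 * x q 0.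

Lemma SG_dot w x : SG w x = sg (dot w x).
Proof. by rewrite /SG /dot (big_morph sg sgD sg0). Qed.

Lemma SGD w x z : SG w (x + z) = SG w x * SG w z.
Proof. rewrite /SG -big_split; apply: eq_bigr => q _; by rewrite !mxE mulrDr sgD. Qed.

Lemma SGDl w w' x : SG (w + w') x = SG w x * SG w' x.
Proof. rewrite /SG -big_split; apply: eq_bigr => q _; by rewrite !mxE mulrDl sgD. Qed.

Lemma prod_ind (x y : qv) :
  \prod_(q : 'I_Q) ((x q 0 == y q 0)%:R : C) = (x == y)%:R.
Proof.
case: (eqVneq x y) => [->|Hne]; first by rewrite big1 // => q _; rewrite eqxx.
have [q Hq] : exists q : 'I_Q, x q 0 != y q 0.
  apply/existsP; apply: contraR Hne; rewrite negb_exists => /forallP H.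
  apply/eqP/matrixP => i j; rewrite (ord1 j); exact/eqP/negbNE/H.
by rewrite (bigD1 q) //= (negbTE Hq) mul0r.
Qed.

Lemma pauli_str (v w x y : qv) :
  pauli_op C (str v w) x y = (x == y + v)%:R * SG w x * PH v w.
Proof.
rewrite /pauli_op /str /SG /PH -prod_ind -!big_split /=.
by apply: eq_bigr => q _; rewrite sigma_str1 !mxE.
Qed.

Lemma PH_neq0 v w : PH v w != 0.
Proof.
rewrite /PH; apply/prodf_neq0 => q _; rewrite /ph; case: ifP => _;
by rewrite ?oppr_eq0 ?neq0Ci ?oner_eq0.
Qed.

Lemma sum_ind (F : qv -> C) (x v : qv) :
  \sum_(z : qv) (x == z + v)%:R * F z = F (x + v).
Proof.
rewrite (bigD1 (x + v)) //= -addrA cV_aa addr0 eqxx mul1r big1 ?addr0 // => z Hz.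
by rewrite cV_eq_add (negbTE Hz) mul0r.
Qed.

Lemma ind_swap (x y v v' : qv) : (x + v == y + v') = (x + v' == y + v).
Proof.
apply/eqP/eqP => H.
  have -> : x = y + v' + v by rewrite -H -addrA cV_aa addr0.
  by rewrite -addrA (addrC v) addrA -(addrA y) cV_aa addr0.
have -> : x = y + v + v' by rewrite -H -addrA cV_aa addr0.
by rewrite -addrA (addrC v') addrA -(addrA y) cV_aa addr0.
Qed.

Lemma pauli_comm (v w v' w' : qv) : dot w' v = dot w v' ->
  opmul (pauli_op C (str v w)) (pauli_op C (str v' w'))
  = opmul (pauli_op C (str v' w')) (pauli_op C (str v w)).
Proof.
move=> Hd; apply: functional_extensionality => x;
  apply: functional_extensionality => y; rewrite /opmul.
have E1 : forall (a b c d : qv), \sum_(z : qv) pauli_op C (str a b) x z * pauli_op C (str c d) z y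
   = \sum_(z : qv) (x == z + a)%:R * (SG b x * PH a b * ((z == y + c)%:R * SG d z * PH c d)).
  by move=> a b c d; apply: eq_bigr => z _; rewrite !pauli_str; ring.
rewrite !E1 !sum_ind !SGD ind_swap !SG_dot Hd; ring.
Qed.

Lemma cardqv : #|{: qv}| = (2 ^ Q)%N.
Proof. by rewrite card_mx card_ord muln1. Qed.

Lemma orth (u : qv) : \sum_(w : qv) SG w u = (u == 0)%:R * (2 ^ Q)%:R.
Proof.
case: (eqVneq u 0) => [->|Hne].
  rewrite (eq_bigr (fun _ => 1)); last first.
    by move=> w _; rewrite /SG big1 // => q _; rewrite mxE mulr0.
  by rewrite sumr_const cardqv mul1r.
have [q Hq] : exists q : 'I_Q, u q 0 != 0.
  apply/existsP; apply: contraR Hne; rewrite negb_exists => /forallP H.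
  apply/eqP/matrixP => i j; rewrite (ord1 j) mxE; exact/eqP/negbNE/H.
have Hu : u q 0 = 1 by case: (F2_cases (u q 0)) Hq => ->.
set dl : qv := delta_mx q 0.
have Hd : SG dl u = -1.
  rewrite /SG (bigD1 q) //= big1 ?mulr1.
    by rewrite /dl mxE !eqxx Hu mul1r.
  by move=> i Hi; rewrite /dl mxE (negbTE Hi) mul0r.
set S := \sum_(w : qv) SG w u.
have HS : S = - S.
  rewrite {1}/S (reindex_inj (addIr dl)) /=.
  under eq_bigr do rewrite SGDl Hd mulrN1.
  by rewrite sumrN.
have : S *+ 2 == 0 by rewrite mulr2n {1}HS addNr.
by rewrite mulrn_eq0 /= mul0r => /eqP.
Qed.

Definition fcoef (v : qv) (d : qv -> C) (w : qv) : C :=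
  (PH v w)^-1 * ((2 ^ Q)%:R)^-1 * \sum_(z : qv) d z * SG w z.

Lemma fourier (v : qv) (d : qv -> C) (x y : qv) :
  \sum_(w : qv) fcoef v d w * pauli_op C (str v w) x y = (x == y + v)%:R * d x.
Proof.
have HN : ((2 ^ Q)%:R : C) != 0 by rewrite pnatr_eq0 expn_eq0.
have E : forall w, fcoef v d w * pauli_op C (str v w) x y =
   ((x == y + v)%:R * ((2 ^ Q)%:R)^-1) * \sum_(z : qv) d z * SG w (z + x).
  move=> w.
  have -> : \sum_(z : qv) d z * SG w (z + x) = (\sum_(z : qv) d z * SG w z) * SG w x.
    by rewrite big_distrl; apply: eq_bigr => z _; rewrite SGD mulrA.
  rewrite /fcoef pauli_str.
  have HP := PH_neq0 v w; by field; rewrite HN HP.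
under eq_bigr do rewrite E.
rewrite -mulr_sumr exchange_big /=.
under eq_bigr do rewrite -mulr_sumr orth.
rewrite (bigD1 x) //= cV_aa eqxx big1 ?addr0.
  by rewrite (_ : true%:R = 1 :> C) // mul1r; field; rewrite HN.
move=> z Hz; rewrite eq_sym.
suff -> : (0 == z + x) = false by rewrite !mul0r mulr0.
by rewrite -cV_eq_add add0r (negbTE Hz).
Qed.

Definition sG (v : qv) (p : 'F_2) (w : qv) : pstring Q :=
  if dot w v == p then str v w else str 0 0.
Definition cG (v : qv) (d : qv -> C) (p : 'F_2) (w : qv) : C :=
  if dot w v == p then fcoef v d w else 0.

Lemma dot0l u : dot 0 u = 0.
Proof. by rewrite /dot big1 // => q _; rewrite mxE mul0r. Qed.
Lemma dot0r u : dot u 0 = 0.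
Proof. by rewrite /dot big1 // => q _; rewrite mxE mulr0. Qed.

Lemma group_comm (v : qv) (p : 'F_2) (w w' : qv) :
  opmul (pauli_op C (sG v p w)) (pauli_op C (sG v p w'))
  = opmul (pauli_op C (sG v p w')) (pauli_op C (sG v p w)).
Proof.
rewrite /sG; case: eqP => H1; case: eqP => H2 //; apply: pauli_comm.
- by rewrite H1 H2.
- by rewrite dot0l dot0r.
- by rewrite dot0l dot0r.
Qed.

Lemma group_decomp (v : qv) (d : qv -> C) (x y : qv) :
  (x == y + v)%:R * d x =
  \sum_(p : 'F_2) \sum_(w : qv) cG v d p w * pauli_op C (sG v p w) x y.
Proof.
rewrite -fourier exchange_big /=; apply: eq_bigr => w _.
rewrite (bigD1 (dot w v)) //= big1 ?addr0; first by rewrite /cG /sG eqxx.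
by move=> p Hp; rewrite /cG eq_sym (negbTE Hp) mul0r.
Qed.
End Pauli.

Section Ferm.
Variable C : numClosedFieldType.

Definition supp k (A : op C ('cV['F_2]_k)) (u : 'cV['F_2]_k) :=
  forall x y, x != y + u -> A x y = 0.

Lemma supp_ind k (A : op C ('cV['F_2]_k)) u : supp A u ->
  forall x y, A x y = (x == y + u)%:R * A x (x + u).
Proof.
move=> H x y; case: (eqVneq x (y + u)) => [E|E].
  by rewrite mul1r E -addrA cV_aa addr0.
by rewrite H // mul0r.
Qed.

Lemma supp_ann M (j : 'I_M) : supp (ann C j) (delta_mx j 0).
Proof. by move=> x y H; rewrite /ann (negbTE H) mulr0; case: ifP. Qed.

Lemma supp_cre M (j : 'I_M) : supp (cre C j) (delta_mx j 0).
Proof.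
move=> x y H; rewrite /cre /adj supp_ann ?conjC0 //.
by rewrite -cV_eq_add.
Qed.

Lemma supp_mul k (A B : op C ('cV['F_2]_k)) u u' :
  supp A u -> supp B u' -> supp (opmul A B) (u' + u).
Proof.
move=> HA HB x y H; rewrite /opmul big1 // => z _.
case: (eqVneq x (z + u)) => [E|E]; last by rewrite HA // mul0r.
rewrite HB ?mulr0 //; apply: contra H => /eqP E2.
by rewrite E E2 addrA.
Qed.

Lemma supp_scale k (A : op C ('cV['F_2]_k)) u (c : C) :
  supp A u -> supp (fun x y => c * A x y) u.
Proof. by move=> H x y Hxy; rewrite H // mulr0. Qed.

Lemma supp_encode M N Q (G : 'M['F_2]_(Q, M)) (A : op C (fock M)) u :
  supp A u -> supp (encode N G A) (G *m u).
Proof.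
move=> H x y Hxy; rewrite /encode big1 // => b _; rewrite big1 // => b' _.
case: (eqVneq b' (b + u)) => [E|E]; last by rewrite H // mul0r.
case: (eqVneq x (G *m b')) => [E1|]; last by rewrite /= mulr0.
case: (eqVneq y (G *m b)) => [E2|]; last by rewrite /= mulr0.
by move: Hxy; rewrite E1 E2 E mulmxDr eqxx.
Qed.

Lemma encode_ext M N Q (G : 'M['F_2]_(Q, M)) (A B : op C (fock M)) :
  (forall a b, A a b = B a b) -> forall x y, encode N G A x y = encode N G B x y.
Proof.
by move=> H x y; apply: eq_bigr => b _; apply: eq_bigr => b' _; rewrite H.
Qed.

Lemma encode_sum M N Q (G : 'M['F_2]_(Q, M)) (I : finType) (F : I -> op C (fock M)) x y :
  encode N G (fun a b => \sum_(i : I) F i a b) x y = \sum_(i : I) encode N G (F i) x y.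
Proof.
rewrite /encode.
under eq_bigr do under eq_bigr do rewrite big_distrl.
under eq_bigr do rewrite exchange_big.
by rewrite exchange_big.
Qed.
End Ferm.

Section Terms.
Variable C : numClosedFieldType.
Variable M : nat.
Variable h : 'I_M -> 'I_M -> C.
Variable g : 'I_M -> 'I_M -> 'I_M -> 'I_M -> C.

Definition Tm := ('I_M * 'I_M + ('I_M * 'I_M) * ('I_M * 'I_M))%type.

Definition termop (t : Tm) : op C (fock M) :=
  match t with
  | inl (i, j) => fun x y => h i j * opmul (cre C i) (ann C j) x y
  | inr ((i, j), (k, l)) => fun x y => g i j k l *
       opmul (opmul (cre C i) (cre C j)) (opmul (ann C k) (ann C l)) x y
  end.

Definition dl (i : 'I_M) : fock M := delta_mx i 0.

Definition termvec (t : Tm) : fock M :=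
  match t with
  | inl (i, j) => dl j + dl i
  | inr ((i, j), (k, l)) => (dl l + dl k) + (dl j + dl i)
  end.

Lemma supp_term t : supp (termop t) (termvec t).
Proof.
case: t => [[i j]|[[i j] [k l]]] /=; apply: supp_scale.
  by apply: supp_mul; [apply: supp_cre|apply: supp_ann].
by apply: supp_mul; apply: supp_mul;
  (apply: supp_cre || apply: supp_ann).
Qed.

Lemma Hop_sum x y : Hop h g x y = \sum_(t : Tm) termop t x y.
Proof.
rewrite /Hop big_sumType /=; congr (_ + _).
  by rewrite pair_big /=; apply: eq_bigr => [[i j]] _.
under eq_bigr do under eq_bigr do rewrite pair_big /=.
rewrite pair_big /= pair_big /=; apply: eq_bigr => [[[i j] [k l]]] _ //.
Qed.
End Terms.

Lemma sum_enum (C : numClosedFieldType) (T : finType) (F : T -> C) :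
  \sum_(s : T) F s = \sum_(t < #|{: T}|) F (enum_val t).
Proof.
rewrite (reindex (@enum_val T (mem T))) //.
exact: (onW_bij _ (enum_val_bij T)).
Qed.

Theorem theorem2 :
  exists c : nat,
  forall (C : numClosedFieldType) (M N Q : nat),
    (0 < M)%N -> (0 < N)%N -> (0 < Q)%N -> (N <= M)%N ->
  forall G : 'M['F_2]_(Q, M),
    {in Sfix M N &, injective (fun b : fock M => G *m b)} ->
  forall (h : 'I_M -> 'I_M -> C) (g : 'I_M -> 'I_M -> 'I_M -> 'I_M -> C),
    (forall i j, h i j \is Num.real) ->
    (forall i j k l, g i j k l \is Num.real) ->
    herm_op (Hop h g) ->
  exists (K : nat) (n : 'I_K -> nat)
         (coef : forall t : 'I_K, 'I_(n t) -> C)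
         (P : forall t : 'I_K, 'I_(n t) -> pstring Q),
    [/\ (K <= c * M ^ 4)%N,
        (forall (t : 'I_K) (r s : 'I_(n t)),
            opmul (pauli_op C (P t r)) (pauli_op C (P t s))
            = opmul (pauli_op C (P t s)) (pauli_op C (P t r))) &
        (forall x y : qubits Q,
            encode N G (Hop h g) x y
            = \sum_(t : 'I_K) \sum_(r : 'I_(n t))
                 coef t r * pauli_op C (P t r) x y)].
Proof.
exists 4%N => C M N Q HM _ _ _ G _ h g _ _ _.
pose T := (Tm M * 'F_2)%type.
pose E (t : Tm M) : op C (qubits Q) := encode N G (termop h g t).
pose v (t : Tm M) : qv Q := G *m termvec t.
pose d (t : Tm M) : qv Q -> C := fun x => E t x (x + v t).
exists #|{: T}|, (fun _ => #|{: qv Q}|).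
exists (fun t r => cG (v (enum_val t).1) (d (enum_val t).1) (enum_val t).2 (enum_val r)).
exists (fun t r => sG (v (enum_val t).1) (enum_val t).2 (enum_val r)).
split.
- rewrite card_prod card_sum !card_prod !card_ord.
  have -> : (Zp_trunc (pdiv 2)).+2 = 2%N by [].
  nia.
- by move=> t r s; apply: group_comm.
- move=> x y.
  rewrite (encode_ext _ _ (Hop_sum h g)) encode_sum.
  have -> : \sum_(t : Tm M) encode N G (termop h g t) x y
          = \sum_(t : Tm M) \sum_(p : 'F_2) \sum_(w : qv Q)
               cG (v t) (d t) p w * pauli_op C (sG (v t) p w) x y.
    apply: eq_bigr => t _; rewrite -group_decomp.
    rewrite /d /E /v; apply: supp_ind; apply: supp_encode; exact: supp_term.
  rewrite pair_big /= sum_enum; apply: eq_bigr => t _.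
  by rewrite sum_enum.
Qed.
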